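(* Let $D=(V,A)$ be a digraph with minimum in-degree at least 1, and let $\mathcal{L}D=\mathcal{L}_{(A',\phi)}D$ be a partial line digraph of $D$. Then (i) the number of kernels of $D$ equals the number of kernels of $\mathcal{L}D$; (ii) the number of quasikernels of $D$ is less than or equal to the number of quasikernels of $\mathcal{L}D$.
   Context: Digraphs are loopless and without multiple arcs. For a vertex $j$, $\omega^-(j)$ is the set of arcs with terminal vertex $j$; for a set of arcs $\Omega$, $H(\Omega)=\{y:(x,y)\in\Omega\}$. The arc $(x,y)$ is also written $xy$. $d(x,y)$ denotes directed distance and $d(x,K)=\min_{y\in K}d(x,y)$. Partial line digraph: given $D=(V,A)$ with minimum in-degree at least 1, take an arc subset $A'\subseteq A$ and a surjective map $\phi:A\to A'$ such that (i) $H(A')=V$; (ii) $\phi$ restricted to $A'$ is the identity, and for every vertex $j\in V$, $\phi(\omega^-(j))\subseteq\omega^-(j)\cap A'$. The partial line digraph $\mathcal{L}_{(A',\phi)}D$ has vertex set $A'$ and arc set $\{(ij,\phi(j,k)) : ij\in A',\ (j,k)\in A\}$. A $(k,l)$-kernel is a vertex set $K$ with $d(u,v)\ge k$ for all distinct $u,v\in K$ and $d(x,K)\le l$ for every vertex $x\notin K$. A kernel is a $(2,1)$-kernel (independent and every vertex outside has an out-neighbour inside); a quasikernel is a $(2,2)$-kernel. *)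

(* Defs.v *)
From mathcomp Require Import all_boot.
Set Implicit Arguments. Unset Strict Implicit. Unset Printing Implicit Defensive.

(* A digraph D = (V, A) with V : finType and arc relation e : rel V;
   the arc set A is {(x,y) | e x y}. Digraphs are loopless; multiple arcs
   cannot occur since arcs form a relation. *)
Definition loopless (V : finType) (e : rel V) : Prop := forall x, ~~ e x x.

Definition min_indeg_ge1 (V : finType) (e : rel V) : Prop :=
  forall j, exists i, e i j.

Fixpoint reach_le (V : finType) (e : rel V) (n : nat) (x y : V) : bool :=
  match n with
  | 0 => x == y
  | n'.+1 => (x == y) || [exists z, e x z && reach_le e n' z y]
  end.

(* (k,l)-kernel: d(u,v) >= k for distinct u,v in K, and d(x,K) <= l for x notin K *)
Definition kl_kernel (V : finType) (e : rel V) (k l : nat) (K : {set V}) : bool :=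
  [forall u in K, forall v in K, (u != v) ==> ~~ reach_le e k.-1 u v] &&
  [forall x, (x \notin K) ==> [exists y in K, reach_le e l x y]].

Definition kernel (V : finType) (e : rel V) (K : {set V}) := kl_kernel e 2 1 K.
Definition quasikernel (V : finType) (e : rel V) (K : {set V}) := kl_kernel e 2 2 K.

Definition num_kernels (V : finType) (e : rel V) : nat :=
  #|[set K : {set V} | kernel e K]|.
Definition num_quasikernels (V : finType) (e : rel V) : nat :=
  #|[set K : {set V} | quasikernel e K]|.

(* Partial line digraph data (A', phi) for D = (V, e):
   A' is a set of arcs, phi : V*V -> V*V (only its values on arcs matter).
   (i)  H(A') = V;
   (ii) phi is the identity on A', and for every vertex j,
        phi(omega^-(j)) is contained in omega^-(j) cap A'.
   (Surjectivity of phi : A -> A' follows from (ii), but is stated too.) *)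
Definition is_PLD_data (V : finType) (e : rel V) (A' : {set V * V})
    (phi : V * V -> V * V) : Prop :=
  [/\ (forall a, a \in A' -> e a.1 a.2),
      (forall y, exists x, (x, y) \in A'),
      (forall a, a \in A' -> phi a = a),
      (forall i j, e i j -> phi (i, j) \in A' /\ (phi (i, j)).2 = j)
    & (forall b, b \in A' -> exists i j, e i j /\ phi (i, j) = b)].

Definition PLvert (V : finType) (A' : {set V * V}) : finType :=
  {a : V * V | a \in A'}.

Definition PLarc (V : finType) (e : rel V) (A' : {set V * V})
    (phi : V * V -> V * V) : rel (PLvert A') :=
  fun a b => [exists k, e (val a).2 k && (phi ((val a).2, k) == val b)].
Arguments PLarc {V} e A' phi _ _.

(* Main.v *)
Require Import Defs.
From mathcomp Require Import all_boot.
Set Implicit Arguments. Unset Strict Implicit. Unset Printing Implicit Defensive.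

Definition indep (T : finType) (r : rel T) (K : {set T}) :=
  forall u v, u \in K -> v \in K -> u != v -> ~~ r u v.

Lemma reach1 (T : finType) (r : rel T) x y : reach_le r 1 x y = (x == y) || r x y.
Proof.
rewrite /=; case: (x =P y) => //= _.
apply/existsP/idP => [[z /andP[h /eqP<-]] //| h]; by exists y; rewrite h eqxx.
Qed.

Lemma reach2 (T : finType) (r : rel T) x y :
  reach_le r 2 x y = (x == y) || [exists z, r x z && ((z == y) || r z y)].
Proof.
change (reach_le r 2 x y) with ((x == y) || [exists z, r x z && reach_le r 1 z y]).
congr orb; apply: eq_existsb => z; by rewrite reach1.
Qed.

Lemma indepE (T : finType) (r : rel T) (K : {set T}) :
  [forall u in K, forall v in K, (u != v) ==> ~~ reach_le r 1 u v] <-> indep r K.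
Proof.
split.
- move=> /forallP H u v uK vK uv; move: (H u); rewrite uK implyTb => /forallP /(_ v).
  by rewrite vK uv !implyTb reach1 (negbTE uv).
- move=> H; apply/forallP => u; apply/implyP => uK; apply/forallP => v;
  apply/implyP => vK; apply/implyP => uv; rewrite reach1 (negbTE uv) /=; exact: H.
Qed.

Lemma kernelE (T : finType) (r : rel T) (K : {set T}) :
  kernel r K <-> indep r K /\ (forall x, x \notin K -> exists2 y, y \in K & r x y).
Proof.
rewrite /kernel /kl_kernel; split => [/andP [H1 H2]|[H1 H2]].
- split; first exact/indepE.
  move: H2 => /forallP H x xK; move: (H x); rewrite xK implyTb => /existsP [y /andP [yK]].
  rewrite reach1 => /orP [/eqP exy|rxy]; [by move: xK; rewrite exy yK | by exists y].
- apply/andP; split; first exact/indepE.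
  apply/forallP => x; apply/implyP => xK; have [y yK rxy] := H2 x xK.
  apply/existsP; exists y; by rewrite yK reach1 rxy orbT.
Qed.

Lemma quasiE (T : finType) (r : rel T) (K : {set T}) :
  quasikernel r K <-> indep r K /\ (forall x, x \notin K -> exists2 y, y \in K &
       (r x y \/ exists2 z, r x z & r z y)).
Proof.
rewrite /quasikernel /kl_kernel; split => [/andP [H1 H2]|[H1 H2]].
- split; first exact/indepE.
  move: H2 => /forallP H x xK; move: (H x); rewrite xK implyTb => /existsP [y /andP [yK]].
  rewrite reach2 => /orP [/eqP exy|/existsP [z /andP [rxz /orP [/eqP zy|rzy]]]].
  + by move: xK; rewrite exy yK.
  + by exists y => //; left; rewrite -zy.
  + by exists y => //; right; exists z.
- apply/andP; split; first exact/indepE.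
  apply/forallP => x; apply/implyP => xK; have [y yK hxy] := H2 x xK.
  apply/existsP; exists y; rewrite yK reach2 /=; apply/orP; right.
  case: hxy => [rxy|[z rxz rzy]].
  + apply/existsP; exists y; by rewrite rxy eqxx.
  + apply/existsP; exists z; by rewrite rxz rzy orbT.
Qed.

Section PLD.
Variables (V : finType) (e : rel V) (A' : {set V * V}) (phi : V * V -> V * V).
Hypothesis hl : loopless e.
Hypothesis hsurj : forall y, exists x, (x, y) \in A'.
Hypothesis hphi : forall i j, e i j -> phi (i, j) \in A' /\ (phi (i, j)).2 = j.

Local Notation W := (PLvert A').
Local Notation E := (PLarc e A' phi).

Definition mkW i j (h : e i j) : W := exist _ (phi (i, j)) (hphi h).1.

Lemma mkW_head i j (h : e i j) : (val (mkW h)).2 = j.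
Proof. exact: (hphi h).2. Qed.

Lemma arcE (a b : W) :
  E a b = e (val a).2 (val b).2 && (phi ((val a).2, (val b).2) == val b).
Proof.
apply/existsP/andP => [[k /andP [ek /eqP hk]]|[h1 h2]].
- have h : (val b).2 = k by rewrite -hk; exact: (hphi ek).2.
  rewrite h; split => //; by rewrite hk.
- exists (val b).2; by rewrite h1 h2.
Qed.

Lemma arc_to (a : W) k (h : e (val a).2 k) : E a (mkW h).
Proof. apply/existsP; exists k; by rewrite h /= eqxx. Qed.

Lemma heads y : exists a : W, (val a).2 = y.
Proof. have [x hx] := hsurj y; by exists (exist _ (x, y) hx). Qed.

Definition f (K : {set V}) : {set W} := [set a | (val a).2 \in K].

Lemma f_inj : injective f.
Proof.
move=> K1 K2 H; apply/setP => y; have [a ha] := heads y.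
have := congr1 (fun S : {set W} => a \in S) H; by rewrite !inE ha.
Qed.

Lemma f_indep K : indep e K -> indep E (f K).
Proof.
move=> hK a b; rewrite !inE => aK bK ab; apply/negP; rewrite arcE => /andP [eab /eqP hb].
case: (eqVneq (val a).2 (val b).2) => [heq|hne].
- by move: (hl (val a).2); rewrite {2}heq eab.
- by move: (hK _ _ aK bK hne); rewrite eab.
Qed.

Lemma f_kernel K : kernel e K -> kernel E (f K).
Proof.
move=> /kernelE [hi ha]; apply/kernelE; split; first exact: f_indep.
move=> a; rewrite inE => aK; have [y yK ey] := ha _ aK.
exists (mkW ey); [by rewrite inE mkW_head | exact: arc_to].
Qed.

Lemma f_quasi K : quasikernel e K -> quasikernel E (f K).
Proof.
move=> /quasiE [hi ha]; apply/quasiE; split; first exact: f_indep.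
move=> a; rewrite inE => aK; have [y yK [ey|[z ez zy]]] := ha _ aK.
- exists (mkW ey); [by rewrite inE mkW_head | left; exact: arc_to].
- have h' : e (val (mkW ez)).2 y by rewrite mkW_head.
  exists (mkW h'); [by rewrite inE (mkW_head h') | right; exists (mkW ez); exact: arc_to].
Qed.

Lemma kernel_f K' : kernel E K' -> exists2 K, kernel e K & K' = f K.
Proof.
move=> /kernelE [hi ha].
have clos : forall a b, b \in K' -> (val a).2 = (val b).2 -> a \in K'.
  move=> a b bK hab; case: (boolP (a \in K')) => // aK'.
  have [c cK ac] := ha a aK'.
  move: ac; rewrite arcE => /andP [eac /eqP hc].
  have bc : E b c by rewrite arcE -hab eac hc eqxx.
  case: (eqVneq b c) => [bc'|nbc].
  - subst c; by move: (hl (val a).2); rewrite {2}hab eac.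
  - by move: (hi _ _ bK cK nbc); rewrite bc.
pose K := [set y | [exists b in K', (val b).2 == y]].
have eK : K' = f K.
  apply/setP => a; rewrite !inE; apply/idP/existsP => [aK|[b /andP [bK /eqP hb]]].
  - by exists a; rewrite aK eqxx.
  - exact: (clos a b bK (esym hb)).
exists K => //; apply/kernelE; split.
- move=> u v; rewrite !inE => /existsP [b1 /andP [b1K /eqP h1]] /existsP [b2 /andP [b2K /eqP h2]] uv.
  apply/negP => euv; rewrite -h1 in euv.
  have cK : mkW euv \in K' by apply: (clos _ b2); rewrite // mkW_head h2.
  have nbc : b1 != mkW euv.
    have hh : (val b1).2 != (val (mkW euv)).2 by rewrite (mkW_head euv) h1.
    apply/eqP => hbc; move/eqP: hh; apply; exact: (congr1 (fun w : W => (val w).2) hbc).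
  by move: (hi _ _ b1K cK nbc); rewrite arc_to.
- move=> x xK; have [a ha'] := heads x.
  have aK : a \notin K' by rewrite eK inE ha'.
  have [c cK ac] := ha a aK.
  move: ac; rewrite arcE ha' => /andP [exc _].
  exists (val c).2 => //; rewrite inE; apply/existsP; exists c; by rewrite cK eqxx.
Qed.

End PLD.

Theorem corollary2p5 (V : finType) (e : rel V) (A' : {set V * V})
    (phi : V * V -> V * V) :
  loopless e -> min_indeg_ge1 e -> is_PLD_data e A' phi ->
  num_kernels e = num_kernels (PLarc e A' phi) /\
  num_quasikernels e <= num_quasikernels (PLarc e A' phi).
Proof.
move=> hl _ [_ hs _ hp _]; rewrite /num_kernels /num_quasikernels; split.
- have -> : [set K' | kernel (PLarc e A' phi) K'] = @f _ A' @: [set K | kernel e K].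
    apply/setP => K'; rewrite inE; apply/idP/imsetP => [hK'|[K]].
    + have [K hK ->] := kernel_f hl hs hp hK'; exists K => //; by rewrite inE.
    + rewrite inE => hK ->; exact: (f_kernel hl hp).
  by rewrite card_imset //; exact: (f_inj hs).
- rewrite -(card_imset _ (f_inj hs)); apply: subset_leq_card.
  apply/subsetP => K' /imsetP [K]; rewrite inE => hK ->; rewrite inE; exact: (f_quasi hl hp).
Qed.
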